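(* Let $Q\in\mathbb{C}^{2d\times2d}$ be symmetric and $F=\mathcal{J}Q$. Then for every $t>0$, $$S=\Big(\bigcap_{0\le s\le t}\operatorname{Ker}\big({\rm Im}\,e^{2isF}\big)\Big)\cap T^*\mathbb{R}^d=\Big(\bigcap_{k=1}^{\infty}\operatorname{Ker}\big[{\rm Im}\,((iF)^k)\big]\Big)\cap T^*\mathbb{R}^d,$$ and for every $X\in S$ and $t\in\mathbb{R}$ one has $e^{2itF}X=e^{-2t\,{\rm Im}\,F}X$; moreover $e^{2t\,{\rm Im}\,F}S=S$.
   Context: $\mathcal{J}=\begin{pmatrix}0&I_d\\-I_d&0\end{pmatrix}$; ${\rm Re}$, ${\rm Im}$ of matrices are entrywise. Singular space: $S=\Big(\bigcap_{j=0}^{2d-1}\operatorname{Ker}\big[{\rm Re}\,F({\rm Im}\,F)^j\big]\Big)\cap T^*\mathbb{R}^d$, where kernels are in $\mathbb{C}^{2d}$ and $T^*\mathbb{R}^d=\mathbb{R}^{2d}\subseteq\mathbb{C}^{2d}$. *)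

(* Defs.v *)
(* classical reals; complex n x n matrices encoded as pairs
   (real part, imaginary part) of real matrices nat -> nat -> R, of which only
   the entries with indices < n are meaningful. *)
From Stdlib Require Import Arith Reals ClassicalEpsilon.
Open Scope R_scope.

Definition Mat := nat -> nat -> R.
Definition Vec := nat -> R.

Record CMat := mkCMat { ReM : Mat ; ImM : Mat }.

Fixpoint rsum (n : nat) (f : nat -> R) : R :=
  match n with O => 0 | S m => rsum m f + f m end.

Definition mid : Mat := fun i j => if Nat.eqb i j then 1 else 0.
Definition mzero : Mat := fun _ _ => 0.
Definition madd (A B : Mat) : Mat := fun i j => A i j + B i j.
Definition msub (A B : Mat) : Mat := fun i j => A i j - B i j.
Definition mscal (a : R) (A : Mat) : Mat := fun i j => a * A i j.
Definition mmul (n : nat) (A B : Mat) : Mat :=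
  fun i j => rsum n (fun k => A i k * B k j).
Fixpoint mpow (n : nat) (A : Mat) (k : nat) : Mat :=
  match k with O => mid | S k' => mmul n A (mpow n A k') end.

Definition mapply (n : nat) (A : Mat) (x : Vec) : Vec :=
  fun i => rsum n (fun k => A i k * x k).
Definition veq (n : nat) (x y : Vec) : Prop := forall i, (i < n)%nat -> x i = y i.
(* x in R^n (viewed inside C^n) lies in the kernel of the complex matrix
   with real part A and imaginary part 0, i.e. A x = 0 *)
Definition rker (n : nat) (A : Mat) (x : Vec) : Prop :=
  veq n (mapply n A x) (fun _ => 0).

Definition cofReal (A : Mat) : CMat := mkCMat A mzero.
Definition cid : CMat := cofReal mid.
Definition czero : CMat := cofReal mzero.
Definition cadd (A B : CMat) : CMat :=
  mkCMat (madd (ReM A) (ReM B)) (madd (ImM A) (ImM B)).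
Definition cmul (n : nat) (A B : CMat) : CMat :=
  mkCMat (msub (mmul n (ReM A) (ReM B)) (mmul n (ImM A) (ImM B)))
         (madd (mmul n (ReM A) (ImM B)) (mmul n (ImM A) (ReM B))).
(* multiplication by the complex scalar a + i b *)
Definition cscal (a b : R) (A : CMat) : CMat :=
  mkCMat (msub (mscal a (ReM A)) (mscal b (ImM A)))
         (madd (mscal a (ImM A)) (mscal b (ReM A))).
Fixpoint cpow (n : nat) (A : CMat) (k : nat) : CMat :=
  match k with O => cid | S k' => cmul n A (cpow n A k') end.

Fixpoint cexp_partial (n : nat) (A : CMat) (N : nat) : CMat :=
  match N with
  | O => czero
  | S M => cadd (cexp_partial n A M) (cscal (/ INR (fact M)) 0 (cpow n A M))
  end.

Definition is_cexp (n : nat) (A E : CMat) : Prop :=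
  forall i j, (i < n)%nat -> (j < n)%nat ->
    Un_cv (fun N => ReM (cexp_partial n A N) i j) (ReM E i j) /\
    Un_cv (fun N => ImM (cexp_partial n A N) i j) (ImM E i j).

Definition cexp (n : nat) (A : CMat) : CMat :=
  epsilon (inhabits czero) (fun E => is_cexp n A E).

(* matrix exponential of a real matrix (real part of the complex one,
   whose imaginary part vanishes) *)
Definition rexp (n : nat) (A : Mat) : Mat := ReM (cexp n (cofReal A)).

(* the symplectic matrix J = [[0, I_d], [-I_d, 0]] of size 2d *)
Definition Jmat (d : nat) : Mat := fun i j =>
  if Nat.ltb i d then (if Nat.eqb j (i + d) then 1 else 0)
  else if Nat.ltb i (2 * d) then (if Nat.eqb (j + d) i then -1 else 0)
  else 0.

Definition csym (n : nat) (Q : CMat) : Prop :=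
  forall i j, (i < n)%nat -> (j < n)%nat ->
    ReM Q i j = ReM Q j i /\ ImM Q i j = ImM Q j i.

Definition Fmat (d : nat) (Q : CMat) : CMat := cmul (2 * d) (cofReal (Jmat d)) Q.

(* singular space S = (cap_{j=0}^{2d-1} Ker[Re F (Im F)^j]) cap R^{2d} *)
Definition singS (d : nat) (Q : CMat) (x : Vec) : Prop :=
  forall j, (j < 2 * d)%nat ->
    rker (2 * d) (mmul (2 * d) (ReM (Fmat d Q)) (mpow (2 * d) (ImM (Fmat d Q)) j)) x.

(* Main.v *)
Require Import Defs.
From Stdlib Require Import Reals ClassicalEpsilon.
From Coquelicot Require Import Coquelicot.
From mathcomp Require all_boot all_algebra Rstruct.
Open Scope R_scope.

Module CH.
Import all_boot all_algebra Rstruct.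
Import GRing.Theory.
Local Open Scope ring_scope.

Lemma rsum_big (n : nat) (f : nat -> R) : rsum n f = \sum_(l < n) f l.
Proof.
elim: n => [|n IH]; first by rewrite big_ord0.
by rewrite big_ord_recr /= IH.
Qed.

Section S.
Variables (n' : nat) (B : nat -> nat -> R).
Definition M : 'M[R]_(n'.+1) := \matrix_(i, j) B i j.

Lemma pow_entry k (i j : 'I_(n'.+1)) : (M ^+ k) i j = mpow n'.+1 B k i j.
Proof.
elim: k i j => [|k IH] i j.
  rewrite expr0 mxE /= /mid.
  case: (eqVneq i j) => [->|ne]; first by rewrite Nat.eqb_refl.
  have : Nat.eqb i j = false.
    apply/Nat.eqb_neq => h; move/eqP: ne; apply; exact: ord_inj h.
  by move=> ->.
rewrite exprS mxE /= /mmul rsum_big.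
apply: eq_bigr => l _; by rewrite IH mxE.
Qed.

Lemma CH_coef : exists e : nat -> R, forall i j : 'I_(n'.+1),
  mpow n'.+1 B n'.+1 i j = \sum_(k < n'.+1) e k * mpow n'.+1 B k i j.
Proof.
set p := char_poly M.
have HC := Cayley_Hamilton M.
have sp : size p = n'.+2 by rewrite size_char_poly.
have mp : p`_(n'.+1) = 1.
  have := char_poly_monic M; rewrite monicE /lead_coef sp /= => /eqP //.
have Hp : horner_mx M p = \sum_(i < size p) p`_i *: M ^+ i.
  rewrite -{1}(coefK p) poly_def rmorph_sum /=.
  apply: eq_bigr => i _.
  by rewrite horner_mxZ rmorphXn /= horner_mx_X.
exists (fun k => - p`_k) => i j.
move: HC; rewrite Hp.
rewrite sp big_ord_recr /= mp scale1r => /eqP; rewrite addr_eq0 => /eqP E.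
have -> : mmul n'.+1 B (mpow n'.+1 B n') i j = (M ^+ n'.+1) i j by rewrite pow_entry.
rewrite -[M ^+ _]opprK -E mxE summxE.
rewrite -sumrN; apply: eq_bigr => k _.
by rewrite mxE pow_entry mulNr.
Qed.
End S.

Lemma CH_rsum (n : nat) (B : nat -> nat -> R) : exists e : nat -> R,
  forall i j, Peano.lt i n -> Peano.lt j n ->
  mpow n B n i j = rsum n (fun k => Rmult (e k) (mpow n B k i j)).
Proof.
case: n => [|n'].
  exists (fun _ => 0) => i j h; inversion h.
have [e He] := CH_coef n' B.
exists e => i j hi hj.
have hi' : (i < n'.+1)%N by apply/ltP.
have hj' : (j < n'.+1)%N by apply/ltP.
rewrite rsum_big; exact: (He (Ordinal hi') (Ordinal hj')).
Qed.
End CH.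


From Stdlib Require Import Arith Lra Lia FunctionalExtensionality.
Open Scope R_scope.

Lemma rsum_ext n f g : (forall k, (k < n)%nat -> f k = g k) -> rsum n f = rsum n g.
Proof.
  induction n; simpl; intros H; [reflexivity|].
  rewrite IHn by (intros; apply H; lia). rewrite H by lia. reflexivity.
Qed.

Lemma rsum_plus n f g : rsum n (fun k => f k + g k) = rsum n f + rsum n g.
Proof. induction n; simpl; [ring|]. rewrite IHn; ring. Qed.

Lemma rsum_minus n f g : rsum n (fun k => f k - g k) = rsum n f - rsum n g.
Proof. induction n; simpl; [ring|]. rewrite IHn; ring. Qed.

Lemma rsum_scal n c f : rsum n (fun k => c * f k) = c * rsum n f.
Proof. induction n; simpl; [ring|]. rewrite IHn; ring. Qed.

Lemma rsum_zero n : rsum n (fun _ => 0) = 0.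
Proof. induction n; simpl; [ring|]. rewrite IHn; ring. Qed.

Lemma rsum_swap n m (f : nat -> nat -> R) :
  rsum n (fun i => rsum m (fun j => f i j)) = rsum m (fun j => rsum n (fun i => f i j)).
Proof.
  induction n; simpl.
  - rewrite rsum_zero; reflexivity.
  - rewrite IHn, <- rsum_plus. reflexivity.
Qed.

Lemma rsum_abs n f : Rabs (rsum n f) <= rsum n (fun k => Rabs (f k)).
Proof.
  induction n; simpl. rewrite Rabs_R0; lra.
  eapply Rle_trans; [apply Rabs_triang|]. lra.
Qed.

Lemma rsum_le n f g : (forall k, (k < n)%nat -> f k <= g k) -> rsum n f <= rsum n g.
Proof.
  induction n; simpl; intros H; [lra|].
  assert (rsum n f <= rsum n g) by (apply IHn; intros; apply H; lia).
  assert (f n <= g n) by (apply H; lia). lra.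
Qed.

Lemma rsum_const n c : rsum n (fun _ => c) = INR n * c.
Proof.
  induction n; [simpl; ring|].
  change (rsum (S n) (fun _ => c)) with (rsum n (fun _ => c) + c). rewrite IHn, S_INR; ring.
Qed.

Lemma rsum_nonneg n f : (forall k, (k < n)%nat -> 0 <= f k) -> 0 <= rsum n f.
Proof. intros H. rewrite <- (rsum_zero n). apply rsum_le. auto. Qed.

Lemma rsum_term n f i : (i < n)%nat -> (forall k, (k < n)%nat -> 0 <= f k) -> f i <= rsum n f.
Proof.
  induction n; intros Hi H; [lia|]. simpl.
  destruct (Nat.eq_dec i n).
  - subst. assert (0 <= rsum n f) by (apply rsum_nonneg; intros; apply H; lia). lra.
  - assert (f i <= rsum n f) by (apply IHn; [lia| intros; apply H; lia]).
    assert (0 <= f n) by (apply H; lia). lra.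
Qed.

Lemma rsum_single n f i : (i < n)%nat -> (forall k, (k < n)%nat -> k <> i -> f k = 0) ->
  rsum n f = f i.
Proof.
  induction n; intros Hi H; [lia|]. simpl.
  destruct (Nat.eq_dec i n).
  - subst. rewrite (rsum_ext n f (fun _ => 0)), rsum_zero; [ring|].
    intros; apply H; lia.
  - rewrite IHn by (try lia; intros; apply H; lia). rewrite (H n) by lia. ring.
Qed.

Lemma sum_f_R0_rsum f N : sum_f_R0 f N = rsum (S N) f.
Proof. induction N; simpl; [ring|]. rewrite IHN. reflexivity. Qed.

Definition zero : Vec := fun _ => 0.

Lemma mapply_mmul n A B x : mapply n (mmul n A B) x = mapply n A (mapply n B x).
Proof.
  apply functional_extensionality; intro i. unfold mapply, mmul.
  rewrite (rsum_ext n (fun k => rsum n (fun k0 => A i k0 * B k0 k) * x k)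
             (fun k => rsum n (fun k0 => A i k0 * B k0 k * x k))).
  2:{ intros k _. rewrite Rmult_comm, <- rsum_scal. apply rsum_ext. intros; ring. }
  rewrite rsum_swap. apply rsum_ext. intros k _.
  rewrite <- rsum_scal. apply rsum_ext. intros; ring.
Qed.

Lemma mapply_veq n A x y : veq n x y -> mapply n A x = mapply n A y.
Proof.
  intros H. apply functional_extensionality; intro i. unfold mapply.
  apply rsum_ext. intros k Hk. rewrite H; auto.
Qed.

Lemma mapply_mid n x : veq n (mapply n mid x) x.
Proof.
  intros i Hi. unfold mapply, mid.
  rewrite (rsum_single n _ i Hi).
  - rewrite Nat.eqb_refl. ring.
  - intros k _ Hk. destruct (Nat.eqb_spec i k); [lia|ring].
Qed.

Lemma mapply_msub n A B x i : mapply n (msub A B) x i = mapply n A x i - mapply n B x i.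
Proof. unfold mapply, msub. rewrite <- rsum_minus. apply rsum_ext; intros; ring. Qed.
Lemma mapply_madd n A B x i : mapply n (madd A B) x i = mapply n A x i + mapply n B x i.
Proof. unfold mapply, madd. rewrite <- rsum_plus. apply rsum_ext; intros; ring. Qed.
Lemma mapply_mscal n c A x i : mapply n (mscal c A) x i = c * mapply n A x i.
Proof. unfold mapply, mscal. rewrite <- rsum_scal. apply rsum_ext; intros; ring. Qed.
Lemma mapply_mzero n x i : mapply n mzero x i = 0.
Proof. unfold mapply, mzero. transitivity (rsum n (fun _ => 0)); [apply rsum_ext; intros; ring| apply rsum_zero]. Qed.
Lemma mapply_vscal n A c x i : mapply n A (fun j => c * x j) i = c * mapply n A x i.
Proof. unfold mapply. rewrite <- rsum_scal. apply rsum_ext; intros; ring. Qed.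
Lemma mapply_zero n A i : mapply n A zero i = 0.
Proof. unfold mapply, zero. transitivity (rsum n (fun _ => 0)); [apply rsum_ext; intros; ring| apply rsum_zero]. Qed.
Lemma mapply_vsum n A m (v : nat -> Vec) (c : nat -> R) i :
  mapply n A (fun j => rsum m (fun k => c k * v k j)) i = rsum m (fun k => c k * mapply n A (v k) i).
Proof.
  unfold mapply.
  rewrite (rsum_ext n _ (fun j => rsum m (fun k => A i j * (c k * v k j)))).
  2:{ intros; rewrite <- rsum_scal; reflexivity. }
  rewrite rsum_swap. apply rsum_ext. intros.
  rewrite <- rsum_scal. apply rsum_ext. intros; ring.
Qed.

Definition pv n B x k : Vec := mapply n (mpow n B k) x.

Lemma pv_S n B x k : pv n B x (S k) = mapply n B (pv n B x k).
Proof. unfold pv. simpl. apply mapply_mmul. Qed.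

Lemma pv_add n B x j k : veq n (mapply n (mpow n B j) (pv n B x k)) (pv n B x (j + k)).
Proof.
  induction j.
  - apply mapply_mid.
  - intros i Hi. simpl. rewrite mapply_mmul, (mapply_veq n B _ _ IHj).
    change (mapply n B (pv n B x (j + k)) i = pv n B x (S (j + k)) i).
    rewrite pv_S. reflexivity.
Qed.

Lemma mpow_mscal n c B k i j : mpow n (mscal c B) k i j = c ^ k * mpow n B k i j.
Proof.
  revert i j. induction k; intros i j; simpl.
  - ring.
  - unfold mmul. rewrite <- rsum_scal. apply rsum_ext. intros l _.
    rewrite IHk. unfold mscal. ring.
Qed.

Lemma cpow_real n M k i j :
  ReM (cpow n (cofReal M) k) i j = mpow n M k i j /\ ImM (cpow n (cofReal M) k) i j = 0.
Proof.
  revert i j. induction k; intros i j; simpl.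
  - split; reflexivity.
  - unfold msub, madd, mmul; simpl. split.
    + rewrite (rsum_ext n (fun k0 => mzero i k0 * _) (fun _ => 0)), rsum_zero.
      2:{ intros; unfold mzero; ring. }
      rewrite Rminus_0_r. apply rsum_ext. intros l _. rewrite (proj1 (IHk l j)). reflexivity.
    + rewrite (rsum_ext n (fun k0 => mzero i k0 * _) (fun _ => 0)), rsum_zero.
      2:{ intros; unfold mzero; ring. }
      rewrite Rplus_0_r. transitivity (rsum n (fun _ => 0)); [|apply rsum_zero].
      apply rsum_ext. intros l _. rewrite (proj2 (IHk l j)). ring.
Qed.

Lemma cpow_scal n F c k i j :
  ReM (cpow n (cscal 0 c F) k) i j = c ^ k * ReM (cpow n (cscal 0 1 F) k) i j /\
  ImM (cpow n (cscal 0 c F) k) i j = c ^ k * ImM (cpow n (cscal 0 1 F) k) i j.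
Proof.
  revert i j. induction k; intros i j; simpl.
  - unfold mid, mzero. split; ring.
  - unfold msub, madd, mmul, mscal; simpl. split.
    + rewrite Rmult_minus_distr_l, <- !rsum_scal. f_equal; apply rsum_ext; intros l _;
      rewrite (proj1 (IHk l j)) || rewrite (proj2 (IHk l j)); unfold msub, madd, mscal; ring.
    + rewrite Rmult_plus_distr_l, <- !rsum_scal. f_equal; apply rsum_ext; intros l _;
      rewrite (proj1 (IHk l j)) || rewrite (proj2 (IHk l j)); unfold msub, madd, mscal; ring.
Qed.

Definition Sinf n (F : CMat) x := forall j, veq n (mapply n (ReM F) (pv n (ImM F) x j)) zero.
Definition Sfin n (F : CMat) x := forall j, (j < n)%nat -> veq n (mapply n (ReM F) (pv n (ImM F) x j)) zero.

Lemma key n F x k :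
  (forall j, (j < k)%nat -> veq n (mapply n (ReM F) (pv n (ImM F) x j)) zero) ->
  veq n (mapply n (ReM (cpow n (cscal 0 1 F) k)) x) (fun i => (-1) ^ k * pv n (ImM F) x k i) /\
  veq n (mapply n (ImM (cpow n (cscal 0 1 F) k)) x) zero.
Proof.
  induction k; intros H.
  - split; intros i Hi; simpl.
    + unfold pv; simpl. ring.
    + apply mapply_mzero.
  - destruct IHk as [HR HI]. { intros; apply H; lia. }
    split; intros i Hi; simpl.
    + rewrite mapply_msub, !mapply_mmul, (mapply_veq _ _ _ _ HR), (mapply_veq _ _ _ _ HI).
      rewrite mapply_zero, mapply_vscal, mapply_msub, !mapply_mscal, pv_S. ring.
    + rewrite mapply_madd, !mapply_mmul, (mapply_veq _ _ _ _ HR), (mapply_veq _ _ _ _ HI).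
      rewrite mapply_zero, mapply_vscal, mapply_madd, !mapply_mscal.
      rewrite (H k (Nat.lt_succ_diag_r k) i Hi). unfold zero. ring.
Qed.

Lemma key2 n F x k :
  (forall j, (j < k)%nat -> veq n (mapply n (ReM F) (pv n (ImM F) x j)) zero) ->
  veq n (mapply n (ImM (cpow n (cscal 0 1 F) (S k))) x)
        (fun i => (-1) ^ k * mapply n (ReM F) (pv n (ImM F) x k) i).
Proof.
  intros H. destruct (key n F x k H) as [HR HI]. intros i Hi. simpl.
  rewrite mapply_madd, !mapply_mmul, (mapply_veq _ _ _ _ HR), (mapply_veq _ _ _ _ HI).
  rewrite mapply_zero, mapply_vscal, mapply_madd, !mapply_mscal. ring.
Qed.

Lemma Im_iff_Sinf n F x :
  (forall k, (1 <= k)%nat -> veq n (mapply n (ImM (cpow n (cscal 0 1 F) k)) x) zero) <-> Sinf n F x.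
Proof.
  split.
  - intros H.
    assert (Hm : forall m j, (j < m)%nat -> veq n (mapply n (ReM F) (pv n (ImM F) x j)) zero).
    { induction m; intros j Hj; [lia|].
      destruct (Nat.eq_dec j m); [|apply IHm; lia]. subst j.
      intros i Hi. pose proof (key2 n F x m IHm i Hi) as E.
      rewrite (H (S m) ltac:(lia) i Hi) in E. unfold zero in *.
      assert (Hp : (-1) ^ m <> 0) by (apply pow_nonzero; lra).
      apply (Rmult_eq_reg_l ((-1) ^ m)); [|exact Hp]. rewrite <- E. ring. }
    intros j. apply (Hm (S j)). lia.
  - intros H k Hk. destruct k; [lia|].
    apply (key n F x (S k)). intros; apply H.
Qed.

Lemma Sfin_Sinf n F x : Sfin n F x -> Sinf n F x.
Proof.
  intros H.
  destruct (CH.CH_rsum n (ImM F)) as [e He].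
  set (B := ImM F) in *. set (A := ReM F) in *.
  assert (Hn : veq n (pv n B x n) (fun i => rsum n (fun k => e k * pv n B x k i))).
  { intros i Hi. unfold pv, mapply.
    rewrite (rsum_ext n _ (fun l => rsum n (fun k => e k * mpow n B k i l * x l))).
    2:{ intros l Hl. rewrite He by auto. rewrite Rmult_comm, <- rsum_scal.
        apply rsum_ext; intros; ring. }
    rewrite rsum_swap. apply rsum_ext. intros k _. rewrite <- rsum_scal.
    apply rsum_ext; intros; ring. }
  assert (Hmn : forall m, veq n (pv n B x (m + n))
                  (fun i => rsum n (fun k => e k * pv n B x (m + k) i))).
  { intros m i Hi. rewrite <- (pv_add n B x m n i Hi).
    rewrite (mapply_veq _ _ _ _ Hn), mapply_vsum. apply rsum_ext. intros k _.
    rewrite (pv_add n B x m k i Hi). reflexivity. }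
  assert (Hall : forall m j, (j < m)%nat -> veq n (mapply n A (pv n B x j)) zero).
  { induction m; intros j Hj; [lia|].
    destruct (Nat.eq_dec j m); [|apply IHm; lia]. subst j.
    destruct (Nat.lt_ge_cases m n) as [Hlt|Hge]; [apply H; auto|].
    replace m with ((m - n) + n)%nat by lia.
    intros i Hi. rewrite (mapply_veq _ _ _ _ (Hmn (m - n)%nat)), mapply_vsum.
    unfold zero. transitivity (rsum n (fun _ => 0)); [|apply rsum_zero].
    apply rsum_ext. intros k Hk. change (fun j : nat => pv n B x (m - n + k) j) with (pv n B x (m - n + k)). rewrite (IHm (m - n + k)%nat ltac:(lia) i Hi). unfold zero; ring. }
  intros j. apply (Hall (S j)). lia.
Qed.

Lemma Sinf_Sfin n F x : Sinf n F x -> Sfin n F x.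
Proof. intros H j _. apply H. Qed.

Lemma singS_Sfin d Q x : singS d Q x <-> Sfin (2 * d) (Fmat d Q) x.
Proof.
  unfold singS, Sfin, rker, pv. split; intros H j Hj; specialize (H j Hj);
  rewrite mapply_mmul in *; exact H.
Qed.

Lemma Sinf_veq n F x y : veq n x y -> Sinf n F x -> Sinf n F y.
Proof.
  intros Hxy H j. unfold pv. rewrite <- (mapply_veq _ _ _ _ Hxy). apply H.
Qed.

Lemma Un_cv_series f l : Un_cv (fun N => rsum N f) l <-> is_series f l.
Proof.
  rewrite is_series_Reals. unfold infinite_sum. split; intros H eps He.
  - destruct (H eps He) as [N HN]. exists N. intros m Hm.
    rewrite sum_f_R0_rsum. apply HN. lia.
  - destruct (H eps He) as [N HN]. exists (S N). intros m Hm.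
    destruct m; [lia|]. rewrite <- sum_f_R0_rsum. apply HN. lia.
Qed.

Lemma is_series_plusR a b la lb : is_series a la -> is_series b lb ->
  is_series (fun k => a k + b k) (la + lb).
Proof. intros Ha Hb. exact (is_series_plus a b la lb Ha Hb). Qed.

Lemma is_series_scalR c a l : is_series a l -> is_series (fun k => c * a k) (c * l).
Proof. intros Ha. exact (is_series_scal c a l Ha). Qed.

Lemma is_series_extR (a b : nat -> R) (l : R) :
  (forall k, a k = b k) -> is_series a l -> is_series b l.
Proof. intros H. apply is_series_ext. exact H. Qed.

Lemma is_series_zero : is_series (fun _ => 0) 0.
Proof.
  apply Un_cv_series. intros eps He. exists O. intros m _.
  rewrite rsum_zero. unfold Rdist. rewrite Rminus_0_r, Rabs_R0. lra.
Qed.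

Lemma is_series_rsum m (f : nat -> nat -> R) (l : nat -> R) :
  (forall j, (j < m)%nat -> is_series (fun k => f k j) (l j)) ->
  is_series (fun k => rsum m (f k)) (rsum m l).
Proof.
  induction m; intros H; simpl.
  - apply is_series_zero.
  - apply is_series_plusR; [apply IHm; intros; apply H; lia| apply H; lia].
Qed.

Lemma is_series_unique' (a : nat -> R) (l1 l2 : R) : is_series a l1 -> is_series a l2 -> l1 = l2.
Proof. intros H1 H2. rewrite <- (is_series_unique a l1 H1). apply is_series_unique; auto. Qed.

Lemma ex_exp_series L : ex_series (fun k => / INR (fact k) * L ^ k).
Proof.
  destruct (exist_exp L) as [l Hl]. exists l. apply is_series_Reals. exact Hl.
Qed.

Lemma ex_series_bound (a : nat -> R) C L :
  (forall k, Rabs (a k) <= C * (/ INR (fact k) * L ^ k)) -> ex_series (fun k => Rabs (a k)).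
Proof.
  intros H. apply (@ex_series_le R_AbsRing R_CompleteNormedModule _ (fun k => C * (/ INR (fact k) * L ^ k))).
  - intros k. change (Rabs (Rabs (a k)) <= C * (/ INR (fact k) * L ^ k)).
    rewrite Rabs_Rabsolu. apply H.
  - destruct (ex_exp_series L) as [l Hl]. exists (C * l). apply is_series_scalR. exact Hl.
Qed.

Lemma cpow_bound n (G : CMat) : exists K, 1 <= K /\ forall k i j, (i < n)%nat -> (j < n)%nat ->
  Rabs (ReM (cpow n G k) i j) <= K ^ k /\ Rabs (ImM (cpow n G k) i j) <= K ^ k.
Proof.
  set (m := rsum n (fun i => rsum n (fun j => Rabs (ReM G i j) + Rabs (ImM G i j)))).
  assert (Hm : forall i j, (i < n)%nat -> (j < n)%nat ->
            Rabs (ReM G i j) <= m /\ Rabs (ImM G i j) <= m).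
  { intros i j Hi Hj.
    assert (H1 : Rabs (ReM G i j) + Rabs (ImM G i j) <= m).
    { unfold m. eapply Rle_trans.
      2:{ apply (rsum_term n _ i Hi). intros; apply rsum_nonneg; intros.
          pose proof (Rabs_pos (ReM G k k0)); pose proof (Rabs_pos (ImM G k k0)); lra. }
      apply (rsum_term n (fun j0 => Rabs (ReM G i j0) + Rabs (ImM G i j0)) j Hj).
      intros. pose proof (Rabs_pos (ReM G i k)); pose proof (Rabs_pos (ImM G i k)); lra. }
    pose proof (Rabs_pos (ReM G i j)); pose proof (Rabs_pos (ImM G i j)); lra. }
  assert (m0 : 0 <= m).
  { unfold m. apply rsum_nonneg; intros; apply rsum_nonneg; intros.
    pose proof (Rabs_pos (ReM G k k0)); pose proof (Rabs_pos (ImM G k k0)); lra. }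
  exists (2 * INR n * m + 1). pose proof (pos_INR n).
  assert (HK : 0 <= 2 * INR n * m) by (apply Rmult_le_pos; lra).
  split; [lra|].
  induction k; intros i j Hi Hj; simpl.
  - unfold mid, mzero. rewrite Rabs_R0. destruct (Nat.eqb i j); rewrite ?Rabs_R1, ?Rabs_R0; lra.
  - unfold msub, madd, mmul.
    assert (Hpk : 0 <= (2 * INR n * m + 1) ^ k) by (apply pow_le; lra).
    assert (Hb : forall (X Y : Mat), (forall i j, (i < n)%nat -> (j < n)%nat -> Rabs (X i j) <= m) ->
               (forall i j, (i < n)%nat -> (j < n)%nat -> Rabs (Y i j) <= (2 * INR n * m + 1) ^ k) ->
               Rabs (rsum n (fun l => X i l * Y l j)) <= INR n * (m * (2 * INR n * m + 1) ^ k)).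
    { intros X Y HX HY. eapply Rle_trans; [apply rsum_abs|].
      rewrite <- rsum_const. apply rsum_le. intros l Hl. rewrite Rabs_mult.
      apply Rmult_le_compat; try apply Rabs_pos; auto. }
    assert (E : 2 * (INR n * (m * (2 * INR n * m + 1) ^ k)) <= (2 * INR n * m + 1) * (2 * INR n * m + 1) ^ k).
    { assert (0 <= (2 * INR n * m + 1) ^ k) by auto. nra. }
    split.
    + unfold Rminus. eapply Rle_trans; [apply Rabs_triang|]. rewrite Rabs_Ropp.
      pose proof (Hb (ReM G) (ReM (cpow n G k)) (fun i j a b => proj1 (Hm i j a b)) (fun i j a b => proj1 (IHk i j a b))).
      pose proof (Hb (ImM G) (ImM (cpow n G k)) (fun i j a b => proj2 (Hm i j a b)) (fun i j a b => proj2 (IHk i j a b))).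
      lra.
    + eapply Rle_trans; [apply Rabs_triang|].
      pose proof (Hb (ReM G) (ImM (cpow n G k)) (fun i j a b => proj1 (Hm i j a b)) (fun i j a b => proj2 (IHk i j a b))).
      pose proof (Hb (ImM G) (ReM (cpow n G k)) (fun i j a b => proj2 (Hm i j a b)) (fun i j a b => proj1 (IHk i j a b))).
      lra.
Qed.

Lemma cexp_partial_eq n G N i j :
  ReM (cexp_partial n G N) i j = rsum N (fun k => / INR (fact k) * ReM (cpow n G k) i j) /\
  ImM (cexp_partial n G N) i j = rsum N (fun k => / INR (fact k) * ImM (cpow n G k) i j).
Proof.
  induction N; simpl.
  - unfold mzero; split; reflexivity.
  - unfold madd, msub, mscal; simpl. destruct IHN as [H1 H2]. rewrite H1, H2. split; ring.
Qed.

Lemma cexp_spec n G i j : (i < n)%nat -> (j < n)%nat ->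
  is_series (fun k => / INR (fact k) * ReM (cpow n G k) i j) (ReM (cexp n G) i j) /\
  is_series (fun k => / INR (fact k) * ImM (cpow n G k) i j) (ImM (cexp n G) i j).
Proof.
  destruct (cpow_bound n G) as [K [HK1 HK]].
  assert (Hex : forall i j, (i < n)%nat -> (j < n)%nat ->
     ex_series (fun k => / INR (fact k) * ReM (cpow n G k) i j) /\
     ex_series (fun k => / INR (fact k) * ImM (cpow n G k) i j)).
  { intros i0 j0 Hi Hj. split; apply ex_series_Rabs; apply (ex_series_bound _ 1 K); intros k;
    rewrite Rabs_mult, Rabs_right by (apply Rle_ge, Rlt_le, Rinv_0_lt_compat, INR_fact_lt_0);
    rewrite Rmult_1_l; apply Rmult_le_compat_l;
    try (apply Rlt_le, Rinv_0_lt_compat, INR_fact_lt_0);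
    [apply (proj1 (HK k i0 j0 Hi Hj))|apply (proj2 (HK k i0 j0 Hi Hj))]. }
  assert (Hc : is_cexp n G (cexp n G)).
  { unfold cexp. apply epsilon_spec.
    exists (mkCMat (fun i j => Series (fun k => / INR (fact k) * ReM (cpow n G k) i j))
                   (fun i j => Series (fun k => / INR (fact k) * ImM (cpow n G k) i j))).
    intros i0 j0 Hi Hj. simpl. split.
    - apply (Un_cv_ext (fun N => rsum N (fun k => / INR (fact k) * ReM (cpow n G k) i0 j0))).
      { intros N; symmetry; apply (proj1 (cexp_partial_eq n G N i0 j0)). }
      apply Un_cv_series. apply Series_correct. apply Hex; auto.
    - apply (Un_cv_ext (fun N => rsum N (fun k => / INR (fact k) * ImM (cpow n G k) i0 j0))).
      { intros N; symmetry; apply (proj2 (cexp_partial_eq n G N i0 j0)). }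
      apply Un_cv_series. apply Series_correct. apply Hex; auto. }
  intros Hi Hj. destruct (Hc i j Hi Hj) as [C1 C2]. split; apply Un_cv_series.
  - apply (Un_cv_ext (fun N => ReM (cexp_partial n G N) i j)); [|exact C1].
    intros; apply (proj1 (cexp_partial_eq n G _ i j)).
  - apply (Un_cv_ext (fun N => ImM (cexp_partial n G N) i j)); [|exact C2].
    intros; apply (proj2 (cexp_partial_eq n G _ i j)).
Qed.

Lemma ident_step (a : nat -> R) C L t :
  0 <= C -> 0 <= L -> (forall k, Rabs (a k) <= C * (/ INR (fact k) * L ^ k)) -> 0 < t ->
  (forall s, 0 < s <= t -> is_series (fun k => a k * s ^ k) 0) ->
  a O = 0 /\ (forall s, 0 < s <= t -> is_series (fun k => a (S k) * s ^ k) 0).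
Proof.
  intros HC HL Hb Ht H.
  assert (Hb' : forall k, Rabs (a (S k)) <= (C * L) * (/ INR (fact k) * L ^ k)).
  { intros k. eapply Rle_trans; [apply Hb|].
    assert (Hf : / INR (fact (S k)) <= / INR (fact k)).
    { apply Rinv_le_contravar; [apply INR_fact_lt_0|]. apply le_INR.
      simpl. pose proof (fact_neq_0 k). lia. }
    change (L ^ S k) with (L * L ^ k). assert (0 <= L ^ k) by (apply pow_le; auto).
    assert (0 <= / INR (fact (S k))) by (apply Rlt_le, Rinv_0_lt_compat, INR_fact_lt_0).
    assert (0 <= C * L * L ^ k) by (apply Rmult_le_pos; [apply Rmult_le_pos|]; auto).
    replace (C * (/ INR (fact (S k)) * (L * L ^ k))) with (/ INR (fact (S k)) * (C * L * L ^ k)) by ring.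
    replace (C * L * (/ INR (fact k) * L ^ k)) with (/ INR (fact k) * (C * L * L ^ k)) by ring.
    apply Rmult_le_compat_r; auto. }
  assert (Hex : forall s, Rabs s <= 1 -> ex_series (fun k => Rabs (a (S k) * s ^ k))).
  { intros s Hs. apply (ex_series_bound _ (C * L) L). intros k.
    rewrite Rabs_mult, <- RPow_abs. eapply Rle_trans; [|apply Hb'].
    rewrite <- (Rmult_1_r (Rabs (a (S k)))) at 2. apply Rmult_le_compat_l; [apply Rabs_pos|].
    rewrite <- (pow1 k). apply pow_incr. split; [apply Rabs_pos|auto]. }
  assert (HD : ex_series (fun k => Rabs (a (S k)))).
  { apply ex_series_bound with (C * L) L. exact Hb'. }
  set (D := Series (fun k => Rabs (a (S k)))).
  assert (D0 : 0 <= D).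
  { assert (Z : Series (fun _ : nat => 0) = 0) by (apply is_series_unique, is_series_zero).
    assert (Series (fun _ : nat => 0) <= D).
    { unfold D. apply Series_le; [|exact HD]. intros; split; [lra|apply Rabs_pos]. }
    lra. }
  assert (Hrel : forall s, 0 < s <= t -> - a O = s * Series (fun k => a (S k) * s ^ k)).
  { intros s Hs.
    assert (H1 : is_series (fun k => a (S k) * s ^ (S k)) (- a O)).
    { apply (is_series_incr_1 (fun k => a k * s ^ k)).
      match goal with |- is_series _ ?l => replace l with 0 by (simpl; unfold plus; simpl; ring) end.
      apply H; auto. }
    assert (Hs1 : ex_series (fun k => a (S k) * s ^ k)).
    { apply ex_series_Rabs. apply (ex_series_bound _ (C * L) (L * s)). intros k.
      rewrite Rabs_mult, <- RPow_abs. rewrite (Rabs_right s) by lra.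
      eapply Rle_trans. { apply Rmult_le_compat_r; [apply pow_le; lra| apply Hb']. }
      rewrite Rpow_mult_distr. right; ring. }
    assert (H2 := is_series_scalR s _ _ (Series_correct _ Hs1)).
    apply (is_series_unique' (fun k => a (S k) * s ^ (S k))); auto.
    eapply is_series_extR; [|exact H2]. intros k; simpl; ring. }
  assert (Ha0 : a O = 0).
  { destruct (Req_dec (a O) 0) as [|Hne]; auto. exfalso.
    assert (Hpos : 0 < Rabs (a O)) by (apply Rabs_pos_lt; auto).
    set (s := Rmin 1 (Rmin t (Rabs (a O) / (2 * (D + 1))))).
    assert (s0 : 0 < s).
    { unfold s. apply Rmin_pos; [lra|]. apply Rmin_pos; [lra|].
      apply Rdiv_lt_0_compat; lra. }
    assert (s1 : s <= 1) by apply Rmin_l.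
    assert (st : s <= t) by (unfold s; eapply Rle_trans; [apply Rmin_r|apply Rmin_l]).
    assert (sa : s <= Rabs (a O) / (2 * (D + 1)))
      by (unfold s; eapply Rle_trans; [apply Rmin_r|apply Rmin_r]).
    pose proof (Hrel s (conj s0 st)) as E.
    assert (Hle : Rabs (Series (fun k => a (S k) * s ^ k)) <= D).
    { eapply Rle_trans; [apply Series_Rabs; apply Hex; rewrite Rabs_right; lra|].
      apply Series_le; [|exact HD]. intros k. split; [apply Rabs_pos|].
      rewrite Rabs_mult. rewrite <- (Rmult_1_r (Rabs (a (S k)))) at 2.
      apply Rmult_le_compat_l; [apply Rabs_pos|]. rewrite <- RPow_abs, <- (pow1 k).
      apply pow_incr. rewrite Rabs_right; lra. }
    assert (Habs : Rabs (a O) <= s * D).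
    { rewrite <- Rabs_Ropp, E, Rabs_mult, Rabs_right by lra.
      apply Rmult_le_compat_l; lra. }
    assert (s * D <= Rabs (a O) / (2 * (D + 1)) * D) by (apply Rmult_le_compat_r; lra).
    assert (Rabs (a O) / (2 * (D + 1)) * D < Rabs (a O)).
    { unfold Rdiv. replace (Rabs (a O) * / (2 * (D + 1)) * D) with (Rabs (a O) * (D / (2 * (D + 1)))) by (unfold Rdiv; ring).
      rewrite <- (Rmult_1_r (Rabs (a O))) at 2. apply Rmult_lt_compat_l; auto.
      apply (Rmult_lt_reg_r (2 * (D + 1))); [lra|]. unfold Rdiv.
      rewrite Rmult_assoc, Rinv_l by lra. lra. }
    lra. }
  split; auto.
  intros s Hs. pose proof (Hrel s Hs) as E. rewrite Ha0, Ropp_0 in E.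
  assert (Hs1 : ex_series (fun k => a (S k) * s ^ k)).
  { apply ex_series_Rabs. apply (ex_series_bound _ (C * L) (L * s)). intros k.
    rewrite Rabs_mult, <- RPow_abs. rewrite (Rabs_right s) by lra.
    eapply Rle_trans. { apply Rmult_le_compat_r; [apply pow_le; lra| apply Hb']. }
    rewrite Rpow_mult_distr. right; ring. }
  pose proof (Series_correct _ Hs1) as H3.
  assert (Z : Series (fun k => a (S k) * s ^ k) = 0).
  { symmetry in E. apply Rmult_integral in E. destruct E; auto. lra. }
  rewrite Z in H3. exact H3.
Qed.

Lemma ident (a : nat -> R) C L t :
  0 <= C -> 0 <= L -> (forall k, Rabs (a k) <= C * (/ INR (fact k) * L ^ k)) -> 0 < t ->
  (forall s, 0 < s <= t -> is_series (fun k => a k * s ^ k) 0) ->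
  forall m, a m = 0.
Proof.
  intros HC HL Hb Ht H m. revert a C HC Hb H. induction m; intros a C HC Hb H.
  - apply (proj1 (ident_step a C L t HC HL Hb Ht H)).
  - destruct (ident_step a C L t HC HL Hb Ht H) as [_ H2].
    apply (IHm (fun k => a (S k)) (C * L)); auto.
    + apply Rmult_le_pos; auto.
    + intros k. eapply Rle_trans; [apply Hb|].
      assert (Hf : / INR (fact (S k)) <= / INR (fact k)).
      { apply Rinv_le_contravar; [apply INR_fact_lt_0|]. apply le_INR.
        simpl. pose proof (fact_neq_0 k). lia. }
      change (L ^ S k) with (L * L ^ k). assert (0 <= L ^ k) by (apply pow_le; auto).
      assert (0 <= C * L * L ^ k) by (apply Rmult_le_pos; [apply Rmult_le_pos|]; auto).
      replace (C * (/ INR (fact (S k)) * (L * L ^ k))) with (/ INR (fact (S k)) * (C * L * L ^ k)) by ring.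
      replace (C * L * (/ INR (fact k) * L ^ k)) with (/ INR (fact k) * (C * L * L ^ k)) by ring.
      apply Rmult_le_compat_r; auto.
Qed.

Lemma exp_apply n G x i : (i < n)%nat ->
  is_series (fun k => / INR (fact k) * mapply n (ReM (cpow n G k)) x i) (mapply n (ReM (cexp n G)) x i) /\
  is_series (fun k => / INR (fact k) * mapply n (ImM (cpow n G k)) x i) (mapply n (ImM (cexp n G)) x i).
Proof.
  intros Hi. split.
  - eapply is_series_extR; [|apply (is_series_rsum n (fun k j => / INR (fact k) * ReM (cpow n G k) i j * x j) (fun j => ReM (cexp n G) i j * x j))].
    + intros k. unfold mapply. rewrite <- rsum_scal. apply rsum_ext; intros; ring.
    + intros j Hj. apply is_series_scal_r. apply (cexp_spec n G i j Hi Hj).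
  - eapply is_series_extR; [|apply (is_series_rsum n (fun k j => / INR (fact k) * ImM (cpow n G k) i j * x j) (fun j => ImM (cexp n G) i j * x j))].
    + intros k. unfold mapply. rewrite <- rsum_scal. apply rsum_ext; intros; ring.
    + intros j Hj. apply is_series_scal_r. apply (cexp_spec n G i j Hi Hj).
Qed.

Lemma rexp_apply n B c x i : (i < n)%nat ->
  is_series (fun k => / INR (fact k) * (c ^ k * pv n B x k i)) (mapply n (rexp n (mscal c B)) x i).
Proof.
  intros Hi. eapply is_series_extR; [|apply (proj1 (exp_apply n (cofReal (mscal c B)) x i Hi))].
  intros k.
  assert (E : mapply n (ReM (cpow n (cofReal (mscal c B)) k)) x i = c ^ k * pv n B x k i).
  { unfold pv, mapply. rewrite <- rsum_scal. apply rsum_ext. intros j _.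
    rewrite (proj1 (cpow_real n (mscal c B) k i j)), mpow_mscal. ring. }
  cbv beta. rewrite E. reflexivity.
Qed.

Lemma series_apply n M (u : nat -> Vec) (z : Vec) i :
  (forall j, (j < n)%nat -> is_series (fun k => u k j) (z j)) ->
  is_series (fun k => mapply n M (u k) i) (mapply n M z i).
Proof.
  intros H. unfold mapply.
  apply (is_series_rsum n (fun k j => M i j * u k j) (fun j => M i j * z j)).
  intros; apply is_series_scalR; auto.
Qed.

Lemma mapply_cpow_scal n F c k x i :
  mapply n (ReM (cpow n (cscal 0 c F) k)) x i = c ^ k * mapply n (ReM (cpow n (cscal 0 1 F) k)) x i /\
  mapply n (ImM (cpow n (cscal 0 c F) k)) x i = c ^ k * mapply n (ImM (cpow n (cscal 0 1 F) k)) x i.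
Proof.
  unfold mapply. split; rewrite <- rsum_scal; apply rsum_ext; intros j _.
  - rewrite (proj1 (cpow_scal n F c k i j)). ring.
  - rewrite (proj2 (cpow_scal n F c k i j)). ring.
Qed.

Lemma part2 n F x t : Sinf n F x ->
  veq n (mapply n (ReM (cexp n (cscal 0 (2 * t) F))) x) (mapply n (rexp n (mscal (-2 * t) (ImM F))) x) /\
  veq n (mapply n (ImM (cexp n (cscal 0 (2 * t) F))) x) zero.
Proof.
  intros HS. split; intros i Hi; destruct (exp_apply n (cscal 0 (2 * t) F) x i Hi) as [E1 E2].
  - apply (is_series_unique' _ _ _ E1).
    eapply is_series_extR; [|apply (rexp_apply n (ImM F) (-2 * t) x i Hi)].
    intros k. rewrite (proj1 (mapply_cpow_scal n F (2 * t) k x i)).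
    rewrite (proj1 (key n F x k (fun j _ => HS j)) i Hi).
    cbv beta. replace (-2 * t) with ((2 * t) * (-1)) by ring. rewrite Rpow_mult_distr. ring.
  - apply (is_series_unique' _ _ _ E2).
    eapply is_series_extR; [|apply is_series_zero].
    intros k. rewrite (proj2 (mapply_cpow_scal n F (2 * t) k x i)).
    rewrite (proj2 (key n F x k (fun j _ => HS j)) i Hi). unfold zero. ring.
Qed.

Lemma part1a n F t x : 0 < t ->
  (Sinf n F x <-> (forall s, 0 <= s <= t -> veq n (mapply n (ImM (cexp n (cscal 0 (2 * s) F))) x) zero)).
Proof.
  intros Ht. split.
  - intros HS s _. apply (proj2 (part2 n F x s HS)).
  - intros H. apply Im_iff_Sinf. intros k _ i Hi.
    destruct (cpow_bound n (cscal 0 1 F)) as [K [HK1 HK]].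
    set (X := rsum n (fun j => Rabs (x j))).
    assert (X0 : 0 <= X) by (apply rsum_nonneg; intros; apply Rabs_pos).
    set (y := fun k => mapply n (ImM (cpow n (cscal 0 1 F) k)) x i).
    assert (Hy : forall k, Rabs (y k) <= X * K ^ k).
    { intros m. unfold y, mapply. eapply Rle_trans; [apply rsum_abs|].
      unfold X. rewrite Rmult_comm, <- rsum_scal. apply rsum_le. intros j Hj.
      rewrite Rabs_mult. apply Rmult_le_compat_r; [apply Rabs_pos|].
      apply (proj2 (HK m i j Hi Hj)). }
    set (a := fun k => / INR (fact k) * (2 ^ k * y k)).
    assert (Ha : forall m, a m = 0).
    { apply (ident a X (2 * K) t); auto; try lra.
      - intros m. unfold a. rewrite !Rabs_mult.
        rewrite (Rabs_right (/ _)) by (apply Rle_ge, Rlt_le, Rinv_0_lt_compat, INR_fact_lt_0).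
        rewrite <- RPow_abs, Rabs_right by lra. rewrite Rpow_mult_distr.
        assert (0 < / INR (fact m)) by (apply Rinv_0_lt_compat, INR_fact_lt_0).
        assert (0 <= 2 ^ m) by (apply pow_le; lra).
        pose proof (Hy m).
        replace (X * (/ INR (fact m) * (2 ^ m * K ^ m))) with (/ INR (fact m) * (2 ^ m * (X * K ^ m))) by ring.
        apply Rmult_le_compat_l; [lra|]. apply Rmult_le_compat_l; lra.
      - intros s Hs. pose proof (proj2 (exp_apply n (cscal 0 (2 * s) F) x i Hi)) as E.
        rewrite (H s ltac:(lra) i Hi) in E. eapply is_series_extR; [|exact E].
        intros m. cbv beta. rewrite (proj2 (mapply_cpow_scal n F (2 * s) m x i)). unfold a, y.
        cbv beta. rewrite Rpow_mult_distr. ring. }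
    pose proof (Ha k) as Hk. unfold a in Hk.
    assert (/ INR (fact k) <> 0) by (apply Rinv_neq_0_compat, INR_fact_neq_0).
    assert (2 ^ k <> 0) by (apply pow_nonzero; lra).
    apply Rmult_integral in Hk. destruct Hk as [|Hk]; [contradiction|].
    apply Rmult_integral in Hk. destruct Hk as [|Hk]; [contradiction|]. exact Hk.
Qed.

Lemma Sinf_exp n F c x : Sinf n F x -> Sinf n F (mapply n (rexp n (mscal c (ImM F))) x).
Proof.
  intros H j i Hi. set (E := rexp n (mscal c (ImM F))).
  unfold pv. rewrite <- mapply_mmul.
  pose proof (series_apply n (mmul n (ReM F) (mpow n (ImM F) j))
                (fun k l => / INR (fact k) * (c ^ k * pv n (ImM F) x k l)) (mapply n E x) i
                (fun l Hl => rexp_apply n (ImM F) c x l Hl)) as S1.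
  apply (is_series_unique' _ _ _ S1). eapply is_series_extR; [|apply is_series_zero].
  intros k. simpl.
  rewrite (mapply_vscal n _ (/ INR (fact k)) (fun l => c ^ k * pv n (ImM F) x k l)).
  rewrite (mapply_vscal n _ (c ^ k) (pv n (ImM F) x k)).
  rewrite mapply_mmul, (mapply_veq _ _ _ _ (pv_add n (ImM F) x j k)).
  rewrite (H (j + k)%nat i Hi). unfold zero. ring.
Qed.

Lemma mpow_bound n B : exists K, 1 <= K /\ forall k i j, (i < n)%nat -> (j < n)%nat ->
  Rabs (mpow n B k i j) <= K ^ k.
Proof.
  destruct (cpow_bound n (cofReal B)) as [K [HK1 HK]]. exists K. split; auto.
  intros k i j Hi Hj. rewrite <- (proj1 (cpow_real n B k i j)). apply (proj1 (HK k i j Hi Hj)).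
Qed.

Lemma binom_sum a b m :
  sum_f_R0 (fun k => / INR (fact k) * / INR (fact (m - k)) * (a ^ k * b ^ (m - k))) m =
  / INR (fact m) * (a + b) ^ m.
Proof.
  rewrite binomial, scal_sum. apply sum_eq. intros k Hk. unfold Binomial.C.
  pose proof (INR_fact_neq_0 k). pose proof (INR_fact_neq_0 (m - k)). pose proof (INR_fact_neq_0 m).
  field. auto.
Qed.

Lemma exp_comp n B a y :
  veq n (mapply n (rexp n (mscal a B)) (mapply n (rexp n (mscal (- a) B)) y)) y.
Proof.
  intros i Hi.
  set (E := rexp n (mscal a B)). set (z := mapply n (rexp n (mscal (- a) B)) y).
  destruct (mpow_bound n B) as [K [HK1 HK]].
  set (X := rsum n (fun j => Rabs (y j))).
  assert (X0 : 0 <= X) by (apply rsum_nonneg; intros; apply Rabs_pos).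
  set (al := fun j k => / INR (fact k) * (a ^ k * mpow n B k i j)).
  set (be := fun j l => / INR (fact l) * ((- a) ^ l * pv n B y l j)).
  assert (Hal : forall j, (j < n)%nat -> is_series (al j) (E i j)).
  { intros j Hj. eapply is_series_extR; [|apply (proj1 (cexp_spec n (cofReal (mscal a B)) i j Hi Hj))].
    intros k. cbv beta. unfold al. rewrite (proj1 (cpow_real n (mscal a B) k i j)), mpow_mscal. reflexivity. }
  assert (Hbe : forall j, (j < n)%nat -> is_series (be j) (z j)).
  { intros j Hj. apply (rexp_apply n B (- a) y j Hj). }
  assert (Hinv : forall k, 0 <= / INR (fact k)) by (intros; apply Rlt_le, Rinv_0_lt_compat, INR_fact_lt_0).
  assert (HaK : forall k, Rabs (a ^ k) * K ^ k = (Rabs a * K) ^ k).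
  { intros k. rewrite <- RPow_abs, Rpow_mult_distr. reflexivity. }
  assert (HaK' : forall k, Rabs ((- a) ^ k) * K ^ k = (Rabs a * K) ^ k).
  { intros k. rewrite <- RPow_abs, Rpow_mult_distr, Rabs_Ropp. reflexivity. }
  assert (Aal : forall j, (j < n)%nat -> ex_series (fun k => Rabs (al j k))).
  { intros j Hj. apply (ex_series_bound _ 1 (Rabs a * K)). intros k. unfold al.
    rewrite !Rabs_mult, (Rabs_right (/ _)) by (apply Rle_ge; auto).
    rewrite Rmult_1_l. apply Rmult_le_compat_l; auto. rewrite <- HaK.
    apply Rmult_le_compat_l; [apply Rabs_pos|]. apply HK; auto. }
  assert (Abe : forall j, (j < n)%nat -> ex_series (fun k => Rabs (be j k))).
  { intros j Hj. apply (ex_series_bound _ X (Rabs a * K)). intros k. unfold be.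
    rewrite !Rabs_mult, (Rabs_right (/ _)) by (apply Rle_ge; auto).
    rewrite <- HaK'.
    assert (Hp : Rabs (pv n B y k j) <= X * K ^ k).
    { unfold pv, mapply. eapply Rle_trans; [apply rsum_abs|].
      unfold X. rewrite Rmult_comm, <- rsum_scal. apply rsum_le. intros l Hl.
      rewrite Rabs_mult. apply Rmult_le_compat_r; [apply Rabs_pos|]. apply HK; auto. }
    pose proof (Rabs_pos ((- a) ^ k)).
    replace (X * (/ INR (fact k) * (Rabs ((- a) ^ k) * K ^ k)))
      with (/ INR (fact k) * (Rabs ((- a) ^ k) * (X * K ^ k))) by ring.
    apply Rmult_le_compat_l; auto. apply Rmult_le_compat_l; auto. }
  assert (Hprod : forall j, (j < n)%nat ->
    is_series (fun m => sum_f_R0 (fun k => al j k * be j (m - k)%nat) m) (E i j * z j)).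
  { intros j Hj. apply is_series_mult; auto. }
  pose proof (is_series_rsum n (fun m j => sum_f_R0 (fun k => al j k * be j (m - k)%nat) m)
                (fun j => E i j * z j) Hprod) as S1.
  set (T := fun m => match m with O => y i | S _ => 0 end).
  assert (HT : forall m, rsum n (fun j => sum_f_R0 (fun k => al j k * be j (m - k)%nat) m) = T m).
  { intros m.
    rewrite (rsum_ext n _ (fun j => rsum (S m) (fun k => al j k * be j (m - k)%nat)))
      by (intros; apply sum_f_R0_rsum).
    rewrite rsum_swap.
    rewrite (rsum_ext (S m) _ (fun k => (/ INR (fact k) * / INR (fact (m - k)) * (a ^ k * (- a) ^ (m - k))) * pv n B y m i)).
    2:{ intros k Hk. unfold al, be.
        cbv beta. replace (pv n B y m i) with (pv n B y (k + (m - k)) i) by (f_equal; lia).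
        rewrite <- (pv_add n B y k (m - k) i Hi).
        unfold mapply. rewrite <- rsum_scal. apply rsum_ext. intros; ring. }
    rewrite (rsum_ext (S m) _ (fun k => pv n B y m i * (/ INR (fact k) * / INR (fact (m - k)) * (a ^ k * (- a) ^ (m - k))))) by (intros; ring).
    rewrite rsum_scal, <- sum_f_R0_rsum, binom_sum.
    replace (a + - a) with 0 by ring.
    destruct m.
    - simpl. unfold T. change (pv n B y 0 i) with (mapply n mid y i). rewrite (mapply_mid n y i Hi). field.
    - unfold T. simpl. ring. }
  assert (ST : is_series T (y i)).
  { apply Un_cv_series. intros eps He. exists 1%nat. intros N HN.
    destruct N; [lia|].
    assert (R1 : forall N, rsum (S N) T = y i).
    { induction N0; simpl. unfold T; ring. simpl in IHN0. rewrite IHN0. unfold T; ring. }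
    rewrite R1. unfold Rdist. rewrite Rminus_diag_eq, Rabs_R0 by reflexivity. lra. }
  symmetry. apply (is_series_unique' T).
  - exact ST.
  - eapply is_series_extR; [exact HT|]. exact S1.
Qed.

Theorem mainTheorem9 (d : nat) (Q : CMat) (HQ : csym (2 * d) Q) :
  (forall t : R, 0 < t -> forall x : Vec,
     (singS d Q x <->
        (forall s : R, 0 <= s <= t ->
           rker (2 * d) (ImM (cexp (2 * d) (cscal 0 (2 * s) (Fmat d Q)))) x)) /\
     (singS d Q x <->
        (forall k : nat, (1 <= k)%nat ->
           rker (2 * d) (ImM (cpow (2 * d) (cscal 0 1 (Fmat d Q)) k)) x)))
  /\
  (forall x : Vec, singS d Q x -> forall t : R,
     veq (2 * d)
       (mapply (2 * d) (ReM (cexp (2 * d) (cscal 0 (2 * t) (Fmat d Q)))) x)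
       (mapply (2 * d) (rexp (2 * d) (mscal (-2 * t) (ImM (Fmat d Q)))) x) /\
     veq (2 * d)
       (mapply (2 * d) (ImM (cexp (2 * d) (cscal 0 (2 * t) (Fmat d Q)))) x)
       (fun _ => 0))
  /\
  (forall t : R, forall y : Vec,
     singS d Q y <->
     exists x : Vec, singS d Q x /\
       veq (2 * d) y (mapply (2 * d) (rexp (2 * d) (mscal (2 * t) (ImM (Fmat d Q)))) x)).
Proof.
  set (n := (2 * d)%nat). set (F := Fmat d Q).
  assert (HS : forall x, singS d Q x <-> Sinf n F x).
  { intros x. rewrite singS_Sfin. split; [apply Sfin_Sinf|apply Sinf_Sfin]. }
  split; [|split].
  - intros t Ht x. split.
    + rewrite HS. apply (part1a n F t x Ht).
    + rewrite HS. symmetry. apply Im_iff_Sinf.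
  - intros x Hx t. apply part2. apply HS. exact Hx.
  - intros t y. split.
    + intros Hy. apply HS in Hy.
      exists (mapply n (rexp n (mscal (- (2 * t)) (ImM F))) y). split.
      * apply HS. apply Sinf_exp. exact Hy.
      * intros i Hi. symmetry. apply (exp_comp n (ImM F) (2 * t) y i Hi).
    + intros [x [Hx Hy]]. apply HS. apply HS in Hx.
      apply (Sinf_veq n F (mapply n (rexp n (mscal (2 * t) (ImM F))) x)).
      * intros i Hi. symmetry. apply Hy; auto.
      * apply Sinf_exp. exact Hx.
Qed.
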